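(* Let $x_i$ be a real variable and let $\mathcal{I}_i=\{\langle l^1,u^1\rangle,\dots,\langle l^m,u^m\rangle\}$ be a finite, nonempty set of partitions of its domain, where each partition is an interval with lower end $l^k$ and upper end $u^k$, $l^k<u^k$. Write $\mathbf{x}_i^l=(l^1,\dots,l^m)\in\mathbb{R}^m$, $\mathbf{x}_i^u=(u^1,\dots,u^m)\in\mathbb{R}^m$, and let $\mathbf{1}\in\mathbb{R}^m$ be the all-ones vector. Define the piecewise quadratic relaxation $$\langle x_i\rangle^{MC_q(\mathcal{I})}=\Big\{(x_i,\widehat{x}_i,\widehat{\mathbf{y}}_i)\in\mathbb{R}\times\mathbb{R}\times\{0,1\}^m:\ \widehat{x}_i\geqslant x_i^2,\ \widehat{x}_i\leqslant\big((\mathbf{x}_i^l\cdot\widehat{\mathbf{y}}_i)+(\mathbf{x}_i^u\cdot\widehat{\mathbf{y}}_i)\big)x_i-(\mathbf{x}_i^l\cdot\widehat{\mathbf{y}}_i)(\mathbf{x}_i^u\cdot\widehat{\mathbf{y}}_i),\ \widehat{\mathbf{y}}_i\cdot\mathbf{1}=1\Big\}$$ and the piecewise McCormick relaxation of the product $x_i\cdot x_i$ $$\langle x_i,x_i\rangle^{MC(\mathcal{I})}=\Big\{(x_i,\widehat{x}_i,\widehat{\mathbf{y}}_i)\in\mathbb{R}\times\mathbb{R}\times\{0,1\}^m:\ \widehat{x}_i\geqslant 2(\mathbf{x}_i^l\cdot\widehat{\mathbf{y}}_i)x_i-(\mathbf{x}_i^l\cdot\widehat{\mathbf{y}}_i)^2,\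 \widehat{x}_i\geqslant 2(\mathbf{x}_i^u\cdot\widehat{\mathbf{y}}_i)x_i-(\mathbf{x}_i^u\cdot\widehat{\mathbf{y}}_i)^2,$$ $$\widehat{x}_i\leqslant\big((\mathbf{x}_i^l\cdot\widehat{\mathbf{y}}_i)+(\mathbf{x}_i^u\cdot\widehat{\mathbf{y}}_i)\big)x_i-(\mathbf{x}_i^l\cdot\widehat{\mathbf{y}}_i)(\mathbf{x}_i^u\cdot\widehat{\mathbf{y}}_i),\ \widehat{\mathbf{y}}_i\cdot\mathbf{1}=1\Big\}.$$ Then $\langle x_i\rangle^{MC_q(\mathcal{I})}\subsetneq\langle x_i,x_i\rangle^{MC(\mathcal{I})}$, i.e. the first set is contained in the second and the containment is strict.
   Context: For vectors $\mathbf{a},\mathbf{b}\in\mathbb{R}^m$, $\mathbf{a}\cdot\mathbf{b}=\sum_{k=1}^m a_kb_k$. The binary vector $\widehat{\mathbf{y}}_i$ selects exactly one active partition of $x_i$; $\widehat{x}_i$ is a lifted variable representing $x_i^2$. These sets are the piecewise convex relaxations used for a square term $x_i^2$ (the first) and for the bilinear term $x_ix_j$ specialized to $j=i$ with a common binary selection vector (the second). *)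

(* Defs.v *)
From HB Require Import structures.
From mathcomp Require Import all_boot all_order all_algebra.
From mathcomp Require Import boolp classical_sets reals.
Set Implicit Arguments. Unset Strict Implicit. Unset Printing Implicit Defensive.
Import Order.TTheory GRing.Theory Num.Theory.
Local Open Scope ring_scope.
Local Open Scope classical_set_scope.

Definition dotv (R : realType) (m : nat) (a b : 'I_m -> R) : R :=
  \sum_(k < m) a k * b k.

Definition onesv (R : realType) (m : nat) : 'I_m -> R := fun _ => 1.

Definition binvec (R : realType) (m : nat) (y : 'I_m -> R) : Prop :=
  forall k, y k = 0 \/ y k = 1.

Definition MCq (R : realType) (m : nat) (xl xu : 'I_m -> R)
  : set (R * R * ('I_m -> R)) :=
  [set p | let: (x, xh, y) := p in
     binvec y /\
     x ^+ 2 <= xh /\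
     xh <= (dotv xl y + dotv xu y) * x - dotv xl y * dotv xu y /\
     dotv y (@onesv R m) = 1].

Definition MC (R : realType) (m : nat) (xl xu : 'I_m -> R)
  : set (R * R * ('I_m -> R)) :=
  [set p | let: (x, xh, y) := p in
     binvec y /\
     2 * dotv xl y * x - (dotv xl y) ^+ 2 <= xh /\
     2 * dotv xu y * x - (dotv xu y) ^+ 2 <= xh /\
     xh <= (dotv xl y + dotv xu y) * x - dotv xl y * dotv xu y /\
     dotv y (@onesv R m) = 1].

(* Main.v *)
Require Import Defs.
From HB Require Import structures.
From mathcomp Require Import all_boot all_order all_algebra.
From mathcomp Require Import boolp classical_sets reals.
From mathcomp Require Import lra.
Import Order.TTheory GRing.Theory Num.Theory.
Local Open Scope ring_scope.
Local Open Scope classical_set_scope.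

Lemma dot_ind (R : realType) (m : nat) (a : 'I_m -> R) (k0 : 'I_m) :
  dotv a (fun k => (k == k0)%:R) = a k0.
Proof.
rewrite /dotv (bigD1 k0) //= eqxx mulr1 big1 ?addr0 // => k /negbTE ->.
by rewrite mulr0.
Qed.

Lemma dot_ind1 (R : realType) (m : nat) (k0 : 'I_m) :
  dotv (fun k => (k == k0)%:R) (@onesv R m) = 1.
Proof.
rewrite /dotv (bigD1 k0) //= eqxx mulr1 big1 ?addr0 // => k /negbTE ->.
by rewrite mul0r.
Qed.

Theorem lemma1 (R : realType) (m : nat) (xl xu : 'I_m -> R) :
  (0 < m)%N ->
  (forall k, xl k < xu k) ->
  MCq xl xu `<` MC xl xu.
Proof.
move=> m0 hlu; split.
  move=> [[x xh] y] /= [hy [h1 [h2 h3]]]; split=> //.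
  set a := dotv xl y; set b := dotv xu y.
  have ha : 0 <= (x - a) ^+ 2 by apply: sqr_ge0.
  have hb : 0 <= (x - b) ^+ 2 by apply: sqr_ge0.
  split; first by nra.
  split; first by nra.
  by split.
pose k0 : 'I_m := Ordinal m0.
pose y : 'I_m -> R := fun k => (k == k0)%:R.
have hk := hlu k0.
move=> /(_ ((xl k0 + xu k0) / 2, xl k0 * xu k0, y)) H.
have : MCq xl xu ((xl k0 + xu k0) / 2, xl k0 * xu k0, y).
  apply: H; rewrite /MC /= /y !dot_ind dot_ind1.
  split; first by move=> k; case: (k == k0); [right|left].
  split; first by lra.
  split; first by lra.
  split; last by [].
  have hab : 0 <= (xl k0 - xu k0) ^+ 2 by apply: sqr_ge0.
  nra.
rewrite /MCq /= /y !dot_ind => -[_ [h _]].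
have hab : 0 < (xu k0 - xl k0) * (xu k0 - xl k0) by rewrite mulr_gt0 // subr_gt0.
nra.
Qed.
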